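(* Let $G$ be an $\alpha_i$-metric graph ($i\ge 0$ an integer) and $u$ an arbitrary vertex. Then for every $v\in F(u)$, $e(v)\ge diam(G)-3i-2$.
   Context: All graphs are finite, connected, unweighted, undirected, simple; $d(u,v)$ is the shortest-path distance. $I(u,v)=\{x: d(u,x)+d(x,v)=d(u,v)\}$. A graph is $\alpha_i$-metric if for all vertices $u,v,w,x$: whenever $v\in I(u,w)$, $w\in I(v,x)$ and $v,w$ are adjacent, then $d(u,x)\ge d(u,v)+d(v,x)-i$. $e(v)=\max_w d(w,v)$, $diam(G)=\max_v e(v)$, and $F(u)=\{w: d(u,w)=e(u)\}$ is the set of vertices most distant from $u$. *)

(* Defs.v *)
From mathcomp Require Import all_boot.
Set Implicit Arguments. Unset Strict Implicit. Unset Printing Implicit Defensive.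

Definition simple_graph (T : finType) (e : rel T) : Prop :=
  symmetric e /\ irreflexive e.

Definition graph_connected (T : finType) (e : rel T) : Prop :=
  forall u v : T, connect e u v.

Definition ball (T : finType) (e : rel T) (u : T) (n : nat) : {set T} :=
  iter n (fun S : {set T} => S :|: [set y | [exists x in S, e x y]]) [set u].

(* Shortest-path distance: least n with v within n steps of u
   (searched over 0 .. #|T|-1, which suffices in a connected graph). *)
Definition dist (T : finType) (e : rel T) (u v : T) : nat :=
  find (fun n => v \in ball e u n) (iota 0 #|T|).

Definition in_interval (T : finType) (e : rel T) (u v x : T) : bool :=
  dist e u x + dist e x v == dist e u v.

Definition alpha_metric (T : finType) (e : rel T) (i : nat) : Prop :=
  forall u v w x : T,
    in_interval e u w v -> in_interval e v x w -> e v w ->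
    dist e u v + dist e v x <= dist e u x + i.

Definition ecc (T : finType) (e : rel T) (v : T) : nat :=
  \max_(w : T) dist e v w.

Definition diam (T : finType) (e : rel T) : nat :=
  \max_(v : T) ecc e v.

Definition farthest (T : finType) (e : rel T) (u : T) : {set T} :=
  [set w | dist e u w == ecc e u].

(* Main.v *)
Require Import Defs.
From mathcomp Require Import all_boot.
From mathcomp Require Import zify.

Set Implicit Arguments. Unset Strict Implicit. Unset Printing Implicit Defensive.

Lemma ballS (T : finType) (e : rel T) u n v :
  (v \in ball e u n.+1) = (v \in ball e u n) || [exists x in ball e u n, e x v].
Proof. by rewrite /ball iterS in_setU inE. Qed.

Lemma ball0 (T : finType) (e : rel T) u v : (v \in ball e u 0) = (v == u).
Proof. by rewrite /ball /= inE. Qed.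

Lemma ball_mono (T : finType) (e : rel T) u n d v :
  v \in ball e u n -> v \in ball e u (n + d).
Proof.
elim: d => [|d IH] H; first by rewrite addn0.
by rewrite addnS ballS IH.
Qed.

Lemma ball_trans (T : finType) (e : rel T) u v w a b :
  v \in ball e u a -> w \in ball e v b -> w \in ball e u (a + b).
Proof.
move=> Hv; elim: b w => [|b IH] w.
  by rewrite ball0 addn0 => /eqP ->.
rewrite ballS => /orP [H|/existsP [x /andP [Hx Hxw]]].
  by rewrite addnS ballS IH.
rewrite addnS ballS; apply/orP; right; apply/existsP; exists x.
by rewrite IH.
Qed.

Lemma ball_sym (T : finType) (e : rel T) u n v : symmetric e ->
  v \in ball e u n -> u \in ball e v n.
Proof.
move=> Hs; elim: n v => [|n IH] v.
  by rewrite !ball0 eq_sym.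
rewrite ballS => /orP [H|/existsP [x /andP [Hx Hxv]]].
  by rewrite ballS IH.
have Hxv1 : x \in ball e v 1.
  rewrite ballS; apply/orP; right; apply/existsP; exists v.
  by rewrite ball0 eqxx /= Hs.
by have := ball_trans Hxv1 (IH _ Hx).
Qed.

Lemma ball_path (T : finType) (e : rel T) u p :
  path e u p -> last u p \in ball e u (size p).
Proof.
elim: p u => [|x p IH] u /=; first by rewrite ball0.
move=> /andP [Hux Hp].
have Hx1 : x \in ball e u 1.
  rewrite ballS; apply/orP; right; apply/existsP; exists u.
  by rewrite ball0 eqxx.
by have := ball_trans Hx1 (IH _ Hp).
Qed.

Lemma ball_conn (T : finType) (e : rel T) u v : graph_connected e ->
  exists2 n, n < #|T| & v \in ball e u n.
Proof.
move=> /(_ u v) /connectP [p Hp ->].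
case: (shortenP Hp) => p' Hp' Hu _.
exists (size p'); last exact: ball_path.
move/card_uniqP: Hu => /= Hc.
have := max_card (mem (u :: p')).
by rewrite Hc.
Qed.

Lemma dist_ball (T : finType) (e : rel T) u v : graph_connected e ->
  v \in ball e u (dist e u v).
Proof.
move=> Hc; have [n Hn Hb] := ball_conn u v Hc.
have Hh : has (fun n => v \in ball e u n) (iota 0 #|T|).
  by apply/hasP; exists n => //; rewrite mem_iota.
have := nth_find 0 Hh.
rewrite has_find size_iota in Hh.
by rewrite nth_iota.
Qed.

Lemma dist_min (T : finType) (e : rel T) u v n :
  v \in ball e u n -> dist e u v <= n.
Proof.
move=> Hb; rewrite leqNgt; apply/negP => Hlt.
have Hs := find_size (fun n => v \in ball e u n) (iota 0 #|T|).
rewrite size_iota in Hs.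
have := before_find 0 Hlt.
rewrite nth_iota; last exact: (leq_trans Hlt Hs).
by rewrite add0n Hb.
Qed.

Definition good (T : finType) (e : rel T) := simple_graph e /\ graph_connected e.

Lemma dist_le (T : finType) (e : rel T) u v n : good e ->
  (dist e u v <= n) <-> (v \in ball e u n).
Proof.
move=> [_ Hc]; split; last exact: dist_min.
move=> H; rewrite -(subnKC H); apply: ball_mono; exact: dist_ball.
Qed.

Lemma dist_refl (T : finType) (e : rel T) u : dist e u u = 0.
Proof. by apply/eqP; rewrite -leqn0; apply: dist_min; rewrite ball0. Qed.

Lemma dist0 (T : finType) (e : rel T) u v : good e -> dist e u v = 0 -> u = v.
Proof.
move=> [_ Hc] H; have := dist_ball u v Hc; rewrite H ball0 => /eqP //.
Qed.

Lemma dist_sym (T : finType) (e : rel T) u v : good e -> dist e u v = dist e v u.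
Proof.
move=> G; have [[Hs _] Hc] := G.
apply/eqP; rewrite eqn_leq; apply/andP; split; apply/(dist_le _ _ _ G);
  apply: ball_sym => //; exact: dist_ball.
Qed.

Lemma dist_tri (T : finType) (e : rel T) u v w : good e ->
  dist e u w <= dist e u v + dist e v w.
Proof.
move=> G; have [_ Hc] := G.
apply/(dist_le _ _ _ G); apply: ball_trans; exact: dist_ball.
Qed.

Lemma dist_edge (T : finType) (e : rel T) a b : good e -> e a b -> dist e a b = 1.
Proof.
move=> G Hab; have [[Hs Hi] Hc] := G.
have H1 : dist e a b <= 1.
  apply/(dist_le _ _ _ G); rewrite ballS; apply/orP; right; apply/existsP.
  by exists a; rewrite ball0 eqxx.
case: (dist e a b) H1 (@dist0 _ e a b G) => [|[|//]] //.
move=> _ /(_ erefl) Eab; by move: Hab; rewrite Eab Hi.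
Qed.

Lemma dist_pred (T : finType) (e : rel T) z w n : good e ->
  dist e z w = n.+1 -> exists g, e z g /\ dist e g w = n.
Proof.
move=> G H; have [[Hs Hi] Hc] := G.
have Hb := dist_ball w z Hc.
have Hwz : dist e w z = n.+1 by rewrite (dist_sym _ _ G).
rewrite Hwz ballS in Hb.
case/orP: Hb => [Hb|/existsP [x /andP [Hx Hxz]]].
  have := dist_min Hb; rewrite Hwz ltnn; done.
exists x; split; first by rewrite Hs.
have H1 := dist_min Hx.
have H2 := dist_tri z x w G.
have Hzx : dist e z x = 1 by apply: (dist_edge G); rewrite Hs.
have Hxw : dist e x w = dist e w x by apply: dist_sym.
move: H1 H2; rewrite Hzx H -Hxw.
set a := dist e x w => H1 H2.
apply/eqP; rewrite eqn_leq H1 /=; by rewrite -(leq_add2l 1).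
Qed.

Lemma slice_ex (T : finType) (e : rel T) x y k : good e ->
  k <= dist e x y -> exists z, dist e x z = k /\ k + dist e z y = dist e x y.
Proof.
move=> G; elim: k => [|k IH] Hk.
  by exists x; rewrite dist_refl.
have [z [Hz1 Hz2]] := IH (ltnW Hk).
have [n Hn] : exists n, dist e z y = n.+1.
  by exists (dist e z y).-1; rewrite prednK //; lia.
have [g [Hzg Hg]] := dist_pred G Hn.
have H1 := dist_tri x z g G.
have H2 := dist_tri x g y G.
have H3 := dist_edge G Hzg.
exists g; split; lia.
Qed.

Lemma descent (T : finType) (e : rel T) i x y m w : good e -> alpha_metric e i ->
  forall n z, dist e z w = n -> dist e x z = m -> m + dist e z y = dist e x y ->
  exists z', [/\ dist e x z' = m, m + dist e z' y = dist e x y &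
    (m + dist e w z' <= dist e w x + i \/
     dist e x y + dist e w z' <= m + dist e w y + i)].
Proof.
move=> G Ha; elim=> [|n IH] z Hn Hxz Hzy.
  have Ezw := dist0 G Hn; subst w.
  exists z; split => //; left.
  by rewrite dist_refl (dist_sym _ _ G) Hxz addn0 leq_addr.
have [g [Hzg Hg]] := dist_pred G Hn.
have Hzg1 := dist_edge G Hzg.
have Hgz1 : dist e g z = 1 by rewrite (dist_sym _ _ G).
have T1 := dist_tri x z g G.
have T2 := dist_tri x g z G.
have T3 := dist_tri g z y G.
have T4 := dist_tri z g y G.
have T5 := dist_tri x g y G.
have Swz := dist_sym w z G.
have Swx := dist_sym w x G.
have Swy := dist_sym w y G.
have Syz := dist_sym y z G.
have Syg := dist_sym y g G.
have [Ex|Ex] := boolP (dist e x g == m.+1).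
  have := Ha x z g w.
  rewrite /in_interval Hzg1 Hg Hn Hxz (eqP Ex) addn1 !eqxx => /(_ erefl erefl Hzg) H.
  exists z; split => //; left; lia.
have [Ey|Ey] := boolP (dist e g y == (dist e z y).+1).
  have := Ha y z g w.
  rewrite /in_interval Hzg1 Hg Hn Syz Syg (eqP Ey) addn1 !eqxx => /(_ erefl erefl Hzg) H.
  exists z; split => //; right; lia.
apply: (IH g) => //; lia.
Qed.

Lemma fact2 (T : finType) (e : rel T) i y z z' p : good e -> alpha_metric e i ->
  e z p -> dist e p y = (dist e z y).+1 -> dist e z' y = dist e z y ->
  dist e z z' <= dist e z' p \/ dist e z z' <= i.
Proof.
move=> G Ha Hzp Hpy Hz'y.
have [Hle|Hlt] := leqP (dist e z z') (dist e z' p); first by left.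
right.
have Hs : symmetric e by case: G => [[]].
have Hpz1 : dist e p z = 1 by apply: (dist_edge G); rewrite Hs.
have T1 := dist_tri z' p z G.
have S1 := dist_sym z z' G.
have := Ha z' p z y.
rewrite /in_interval Hpz1 Hpy.
have E1 : dist e z' p + 1 = dist e z' z by lia.
rewrite E1 add1n !eqxx => /(_ erefl erefl).
rewrite Hs => /(_ Hzp) H; lia.
Qed.

Lemma thin (T : finType) (e : rel T) i x y : good e -> alpha_metric e i ->
  forall m z z', dist e x z = m -> m + dist e z y = dist e x y ->
  dist e x z' = m -> m + dist e z' y = dist e x y -> dist e z z' <= i.+1.
Proof.
move=> G Ha; have Hs : symmetric e by case: G => [[]].
elim=> [|m IH] z z' H1 H2 H3 H4.
  have E1 := dist0 G H1; have E2 := dist0 G H3; subst z z'.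
  by rewrite dist_refl.
have [p [Hzp Hp]] : exists p, e z p /\ dist e p x = m.
  by apply: (dist_pred G); rewrite (dist_sym _ _ G).
have [p' [Hzp' Hp']] : exists p, e z' p /\ dist e p x = m.
  by apply: (dist_pred G); rewrite (dist_sym _ _ G).
have Ezp := dist_edge G Hzp.
have Ezp' := dist_edge G Hzp'.
have Epz : dist e p z = 1 by rewrite (dist_sym _ _ G).
have Epz' : dist e p' z' = 1 by rewrite (dist_sym _ _ G).
have T1 := dist_tri p z y G.
have T2 := dist_tri x p y G.
have T1' := dist_tri p' z' y G.
have T2' := dist_tri x p' y G.
have Sp := dist_sym p x G.
have Sp' := dist_sym p' x G.
have Hpy : dist e p y = (dist e z y).+1 by lia.
have Hp'y : dist e p' y = (dist e z' y).+1 by lia.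
have IHp := IH p p' ltac:(lia) ltac:(lia) ltac:(lia) ltac:(lia).
rewrite leqNgt; apply/negP => HL.
have Ezz : dist e z y = dist e z' y by lia.
have [F|F] := fact2 G Ha Hzp' Hp'y Ezz; last first.
  have := dist_sym z z' G; lia.
have T3 := dist_tri p' p z G.
have S3 := dist_sym z p' G.
have S4 := dist_sym z z' G.
have S5 := dist_sym p p' G.
have := Ha p' p z y.
rewrite /in_interval Epz Hpy.
have E1 : dist e p' p + 1 = dist e p' z by lia.
rewrite E1 add1n !eqxx => /(_ erefl erefl).
rewrite Hs => /(_ Hzp) H; lia.
Qed.

Theorem lemma10 (T : finType) (e : rel T) (i : nat) :
  simple_graph e -> graph_connected e -> alpha_metric e i ->
  forall u v : T, v \in farthest e u ->
  diam e <= ecc e v + 3 * i + 2.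
Proof.
move=> Hsg Hc Ha u v; rewrite inE => /eqP Hv.
have G : good e by split.
apply/bigmax_leqP => x _; apply/bigmax_leqP => y _.
set D := dist e x y.
set m := D %/ 2.
have Hm : m <= D by rewrite /m; lia.
have [z0 [Hz1 Hz2]] := slice_ex G Hm.
have [zu [Hu1 Hu2 Hu3]] := descent (w:=u) G Ha erefl Hz1 Hz2.
have [zv [Hv1 Hv2 Hv3]] := descent (w:=v) G Ha erefl Hz1 Hz2.
have Th := thin G Ha Hu1 Hu2 Hv1 Hv2.
have Eu w : dist e u w <= dist e u v by rewrite Hv; apply: leq_bigmax.
have Ev w : dist e v w <= ecc e v by apply: leq_bigmax.
have Eux := Eu x. have Euy := Eu y. have Evx := Ev x. have Evy := Ev y.
have T1 := dist_tri u zu v G.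
have T2 := dist_tri zu zv v G.
have S1 := dist_sym zv v G.
move: Hu3 Hv3; rewrite -/D => Hu3 Hv3.
rewrite /m in Hu3 Hv3 Hu2 Hv2; lia.
Qed.
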